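(* Let $q\ge1$ be an integer. Suppose there are pairwise disjoint Borel sets $K_0,K_1,K_2$ with $K_0\cup K_1\cup K_2=[0,1)$ and constants $\varepsilon,\delta>0$ such that: (i) for each $x\in K_0$, $e(q,x;\varepsilon,\delta)=1$; (ii) for each $x\in K_1$ there exist $\mathbf{a}_x,\mathbf{b}_x\in\mathcal{A}^q$ with $x(\mathbf{a}_x),x(\mathbf{b}_x)\in K_0$ such that $(\mathbf{a}_x,\mathbf{b}_x)$ and $(\mathbf{b}_x,\mathbf{a}_x)$ are the only possible pairs $(\mathbf{u},\mathbf{v})$ with $\mathbf{u}\ne\mathbf{v}$ in $E(q,x;\varepsilon,\delta)$; (iii) for each $x\in K_2$ there exist $\mathbf{a}_x,\mathbf{b}_x,\mathbf{c}_x\in\mathcal{A}^q$ with $x(\mathbf{a}_x),x(\mathbf{b}_x)\in K_0$ and $x(\mathbf{c}_x)\in K_1$ such that $(\mathbf{a}_x,\mathbf{b}_x),(\mathbf{a}_x,\mathbf{c}_x),(\mathbf{b}_x,\mathbf{a}_x),(\mathbf{c}_x,\mathbf{a}_x)$ are the only possible pairs $(\mathbf{u},\mathbf{v})$ with $\mathbf{u}\ne\mathbf{v}$ in $E(q,x;\varepsilon,\delta)$. Then $\sigma(q)\le t<1.61$, where $t>1$ is the unique solution of $\frac{1}{t^2-1}+\frac{2}{t^3-2}+1=t^2$.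
   Context: Standing setup: $b\ge2$ integer, $\mathcal{A}=\{0,\dots,b-1\}$, $\gamma\in(1/b,1)$, $\psi$ a $\mathbb{Z}$-periodic $C^1$ function. $S(x,\mathbf{i})=\sum_{n\ge1}\gamma^{n-1}\psi\big(\frac{x+i_1+i_2b+\cdots+i_nb^{n-1}}{b^n}\big)$, $S'=\partial_xS$. For $\mathbf{u}\in\mathcal{A}^q$, $x(\mathbf{u})=(x+u_1+u_2b+\cdots+u_qb^{q-1})/b^q$. Sequences $\mathbf{i},\mathbf{j}$ are $(\varepsilon,\delta)$-tangent at $x_0$ if $|S(x_0,\mathbf{i})-S(x_0,\mathbf{j})|\le\varepsilon$ and $|S'(x_0,\mathbf{i})-S'(x_0,\mathbf{j})|\le\delta$. $E(q,x_0;\varepsilon,\delta)$: pairs $(\mathbf{k},\mathbf{l})\in\mathcal{A}^q\times\mathcal{A}^q$ such that some concatenations $\mathbf{ku},\mathbf{lv}$ are $(\varepsilon,\delta)$-tangent at $x_0$; $e(q,x_0;\varepsilon,\delta)=\max_{\mathbf{k}}\#\{\mathbf{l}:(\mathbf{k},\mathbf{l})\in E(q,x_0;\varepsilon,\delta)\}$. Weight function: measurable $\omega:[0,1)\to(0,\infty)$ with $\omega,1/\omega$ bounded. Admissible testing function of order $q$: measurable $V:[0,1)\times\mathcal{A}^q\times\mathcal{A}^q\to[0,\infty)$ such that for some $\varepsilon,\delta>0$, $V(x,\mathbf{u},\mathbf{v})V(x,\mathbf{v},\mathbf{u})\ge1$ whenever $x\in[0,1)$ and $(\mathbf{u},\mathbf{v})\in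 E(q,x;\varepsilon,\delta)$. $\Sigma_{V,\omega}(x)=\sup_{\mathbf{u}}\frac{\omega(x)}{\omega(x(\mathbf{u}))}\sum_{\mathbf{v}}V(x,\mathbf{u},\mathbf{v})$; $\sigma(q)=\inf_{\omega,V}\|\Sigma_{V,\omega}\|_\infty$. *)

(* Defs.v *)
From Stdlib Require Import Reals Rtopology Lra List ClassicalEpsilon.
Open Scope R_scope.

(** Words over A = {0,...,b-1}: lists [u_1; ...; u_q] (u_k = nth (k-1) u 0).
    Infinite sequences i in A^N: functions nat -> nat, with i_k = i (k-1). *)

Definition is_word (b q : nat) (u : list nat) : Prop :=
  length u = q /\ Forall (fun d => (d < b)%nat) u.

Definition is_seq (b : nat) (i : nat -> nat) : Prop := forall n, (i n < b)%nat.

Fixpoint words (b q : nat) : list (list nat) :=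
  match q with
  | O => nil :: nil
  | S q' => flat_map (fun d => map (cons d) (words b q')) (seq 0 b)
  end.

(** i_1 + i_2 b + ... + i_m b^(m-1) *)
Definition digval (b : nat) (i : nat -> nat) (m : nat) : R :=
  sum_f_R0 (fun k => INR (i k) * INR b ^ k) m - INR (i m) * INR b ^ m.

(** x(u) = (x + u_1 + u_2 b + ... + u_q b^(q-1)) / b^q *)
Definition xw (b : nat) (x : R) (u : list nat) : R :=
  (x + digval b (fun k => nth k u 0%nat) (length u)) / INR b ^ (length u).

(** n-th term (n >= 1 written as n.+1) of S(x,i). *)
Definition Sterm (b : nat) (gam : R) (psi : R -> R) (x : R) (i : nat -> nat)
  (n : nat) : R :=
  gam ^ n * psi ((x + digval b i (S n)) / INR b ^ (S n)).

(** S(x,i) = sum_{n>=1} gam^(n-1) psi((x+i_1+...+i_n b^(n-1))/b^n) *)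
Definition Sfun (b : nat) (gam : R) (psi : R -> R) (x : R) (i : nat -> nat) : R :=
  epsilon (inhabits 0) (fun l => infinite_sum (Sterm b gam psi x i) l).

Definition Sder (b : nat) (gam : R) (psi : R -> R) (x : R) (i : nat -> nat) : R :=
  epsilon (inhabits 0)
    (fun l => derivable_pt_lim (fun y => Sfun b gam psi y i) x l).

Definition tangent (b : nat) (gam : R) (psi : R -> R) (eps del x0 : R)
  (i j : nat -> nat) : Prop :=
  Rabs (Sfun b gam psi x0 i - Sfun b gam psi x0 j) <= eps /\
  Rabs (Sder b gam psi x0 i - Sder b gam psi x0 j) <= del.

Definition concat (k : list nat) (u : nat -> nat) : nat -> nat :=
  fun n => if Nat.ltb n (length k) then nth n k 0%nat else u (n - length k)%nat.

Definition inE (b : nat) (gam : R) (psi : R -> R) (q : nat) (x0 eps del : R)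
  (k l : list nat) : Prop :=
  is_word b q k /\ is_word b q l /\
  exists u v, is_seq b u /\ is_seq b v /\
    tangent b gam psi eps del x0 (concat k u) (concat l v).

Definition inEb (b : nat) (gam : R) (psi : R -> R) (q : nat) (x0 eps del : R)
  (k l : list nat) : bool :=
  if excluded_middle_informative (inE b gam psi q x0 eps del k l)
  then true else false.

Definition e_num (b : nat) (gam : R) (psi : R -> R) (q : nat) (x0 eps del : R)
  : nat :=
  fold_right Nat.max 0%nat
    (map (fun k => length (filter (inEb b gam psi q x0 eps del k) (words b q)))
         (words b q)).

Inductive borel : (R -> Prop) -> Prop :=
| borel_open : forall A, open_set A -> borel A
| borel_compl : forall A, borel A -> borel (fun x => ~ A x)
| borel_union : forall A : nat -> R -> Prop,
    (forall n, borel (A n)) -> borel (fun x => exists n, A n x)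
| borel_ext : forall A B : R -> Prop,
    (forall x, A x <-> B x) -> borel A -> borel B.

Definition in01 (x : R) : Prop := 0 <= x < 1.

Definition measurable01 (f : R -> R) : Prop :=
  forall B, borel B -> borel (fun x => in01 x /\ B (f x)).

Definition null_set (N : R -> Prop) : Prop :=
  forall eta, 0 < eta -> exists a c : nat -> R,
    (forall x, N x -> exists n, a n <= x <= c n) /\
    (forall n, a n <= c n) /\
    (forall m, sum_f_R0 (fun n => c n - a n) m <= eta).

Definition ess_le (f : R -> R) (s : R) : Prop :=
  null_set (fun x => in01 x /\ s < f x).

Definition weight (om : R -> R) : Prop :=
  measurable01 om /\ (forall x, in01 x -> 0 < om x) /\
  exists M, forall x, in01 x -> om x <= M /\ / om x <= M.

Definition admissible (b : nat) (gam : R) (psi : R -> R) (q : nat)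
  (V : R -> list nat -> list nat -> R) : Prop :=
  (forall u v, is_word b q u -> is_word b q v -> measurable01 (fun x => V x u v)) /\
  (forall x u v, in01 x -> is_word b q u -> is_word b q v -> 0 <= V x u v) /\
  exists eps del, 0 < eps /\ 0 < del /\
    forall x u v, in01 x -> inE b gam psi q x eps del u v ->
      1 <= V x u v * V x v u.

Definition Sigma (b q : nat) (V : R -> list nat -> list nat -> R) (om : R -> R)
  (x : R) : R :=
  fold_right Rmax 0
    (map (fun u => om x / om (xw b x u) *
                   fold_right Rplus 0 (map (fun v => V x u v) (words b q)))
         (words b q)).

(** sigma(q) <= t, sigma(q) being the infimum of ||Sigma_{V,om}||_infty *)
Definition sigma_le (b : nat) (gam : R) (psi : R -> R) (q : nat) (t : R) : Prop :=
  forall s, t < s -> exists om V,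
    weight om /\ admissible b gam psi q V /\ ess_le (Sigma b q V om) s.

Definition t_eq (t : R) : Prop :=
  / (t ^ 2 - 1) + 2 / (t ^ 3 - 2) + 1 = t ^ 2.

(* Main.v *)
Require Import Defs.
From Stdlib Require Import Reals List.
Open Scope R_scope.
From Stdlib Require Import Lra Lia Classical ClassicalEpsilon FunctionalExtensionality ZArith.
Open Scope R_scope.

Lemma le_eps x y : (forall e, 0 < e -> x < y + e) -> x <= y.
Proof.
  intros H. destruct (Rle_or_lt x y) as [h|h]; auto.
  specialize (H ((x - y)/2) ltac:(lra)). lra.
Qed.

Section Geom.
Variables (a : nat -> R) (C g : R).
Hypothesis hg : 0 <= g < 1.
Hypothesis ha : forall k, Rabs (a k) <= C * g ^ k.

Lemma C_nonneg : 0 <= C.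
Proof. specialize (ha 0). simpl in ha. pose proof (Rabs_pos (a 0)). lra. Qed.

Lemma geom_diff n d :
  Rabs (sum_f_R0 a (n + d) - sum_f_R0 a n) <= C * (g ^ (n + 1) - g ^ (n + d + 1)) / (1 - g).
Proof.
  induction d as [|d IH].
  - rewrite Nat.add_0_r. unfold Rminus. rewrite !Rplus_opp_r, Rabs_R0. lra.
  - replace (n + S d)%nat with (S (n + d)) by lia. simpl sum_f_R0.
    replace (sum_f_R0 a (n + d) + a (S (n + d)) - sum_f_R0 a n) with
      ((sum_f_R0 a (n + d) - sum_f_R0 a n) + a (S (n + d))) by ring.
    eapply Rle_trans. apply Rabs_triang.
    specialize (ha (S (n + d))).
    replace (C * (g ^ (n + 1) - g ^ (S (n + d) + 1)) / (1 - g)) with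
      (C * (g ^ (n + 1) - g ^ (n + d + 1)) / (1 - g) + C * g ^ S (n + d)).
    + lra.
    + replace (S (n + d) + 1)%nat with (S (n + d + 1)) by lia.
      replace (S (n+d)) with (n + d + 1)%nat by lia. simpl. field. lra.
Qed.

Lemma geom_diff' n m : (n <= m)%nat ->
  Rabs (sum_f_R0 a m - sum_f_R0 a n) <= C * (g ^ (n + 1) - g ^ (m + 1)) / (1 - g).
Proof.
  intros H. replace m with (n + (m - n))%nat by lia.
  replace (n + (m - n) + 1)%nat with (n + (m - n) + 1)%nat by lia. apply geom_diff.
Qed.

Lemma geom_diff_le n m : (n <= m)%nat ->
  Rabs (sum_f_R0 a m - sum_f_R0 a n) <= C * g ^ (n + 1) / (1 - g).
Proof.
  intros H. eapply Rle_trans. apply geom_diff'; auto.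
  pose proof C_nonneg. assert (0 <= g ^ (m + 1)) by (apply pow_le; lra).
  unfold Rdiv. apply Rmult_le_compat_r. left; apply Rinv_0_lt_compat; lra.
  apply Rmult_le_compat_l; lra.
Qed.

Lemma series_ex : exists l, infinite_sum a l.
Proof.
  destruct (R_complete (sum_f_R0 a)) as [l Hl].
  - intros e He. pose proof C_nonneg.
    destruct (pow_lt_1_zero g ltac:(rewrite Rabs_right; lra) (e * (1 - g) / (C + 1)))
      as [N HN].
    { apply Rdiv_lt_0_compat; try lra. apply Rmult_lt_0_compat; lra. }
    exists N. intros n m Hn Hm. unfold Rdist.
    assert (Hb : forall n m, (N <= n <= m)%nat -> Rabs (sum_f_R0 a m - sum_f_R0 a n) < e).
    { intros n0 m0 [H1 H2]. eapply Rle_lt_trans. apply geom_diff_le; auto.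
      specialize (HN (n0 + 1)%nat ltac:(lia)). rewrite Rabs_right in HN.
      2: { apply Rle_ge, pow_le; lra. }
      apply Rmult_lt_reg_r with (1 - g). lra.
      unfold Rdiv. rewrite Rmult_assoc, Rinv_l, Rmult_1_r by lra.
      apply Rle_lt_trans with ((C+1) * g ^ (n0 + 1)).
      { apply Rmult_le_compat_r. apply pow_le; lra. lra. }
      apply Rmult_lt_reg_r with (/ (C + 1)). apply Rinv_0_lt_compat; lra.
      replace ((C + 1) * g ^ (n0 + 1) * / (C + 1)) with (g ^ (n0 + 1)) by (field; lra).
      unfold Rdiv in HN. lra. }
    destruct (Nat.le_ge_cases n m).
    + rewrite Rabs_minus_sym. apply Hb; lia.
    + apply Hb; lia.
  - exists l. exact Hl.
Qed.

Lemma tail_bound l : infinite_sum a l -> forall n,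
  Rabs (l - sum_f_R0 a n) <= C * g ^ (n + 1) / (1 - g).
Proof.
  intros Hl n. apply le_eps. intros e He.
  destruct (Hl e He) as [N HN]. specialize (HN (max N n) ltac:(lia)).
  unfold Rdist in HN. pose proof (geom_diff_le n (max N n) ltac:(lia)).
  replace (l - sum_f_R0 a n) with ((sum_f_R0 a (max N n) - sum_f_R0 a n) - (sum_f_R0 a (max N n) - l)) by ring.
  eapply Rle_lt_trans. apply Rabs_triang. rewrite Rabs_Ropp. lra.
Qed.

Lemma eps_spec : infinite_sum a (epsilon (inhabits 0) (fun l => infinite_sum a l)).
Proof. apply epsilon_spec. apply series_ex. Qed.

End Geom.

Lemma per_nat (f : R -> R) : (forall x, f (x + 1) = f x) ->
  forall n x, f (x + INR n) = f x /\ f (x - INR n) = f x.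
Proof.
  intros Hf n. induction n as [|n IH]; intros x.
  - simpl. rewrite Rplus_0_r, Rminus_0_r. auto.
  - rewrite S_INR. split.
    + rewrite <- Rplus_assoc, Hf. apply IH.
    + rewrite <- (Hf (x - (INR n + 1))).
      replace (x - (INR n + 1) + 1) with (x - INR n) by ring. apply IH.
Qed.

Lemma per_Z (f : R -> R) : (forall x, f (x + 1) = f x) ->
  forall z x, f (x + IZR z) = f x.
Proof.
  intros Hf z x. destruct (Z_le_gt_dec 0 z).
  - rewrite <- (Z2Nat.id z) by lia. rewrite <- INR_IZR_INZ. apply per_nat; auto.
  - replace z with (- Z.of_nat (Z.to_nat (- z)))%Z by lia.
    rewrite opp_IZR, <- INR_IZR_INZ. apply per_nat; auto.
Qed.

Lemma per_bound (f : R -> R) : (forall x, f (x + 1) = f x) -> continuity f ->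
  exists M, forall x, Rabs (f x) <= M.
Proof.
  intros Hf Hc.
  destruct (continuity_ab_maj f 0 1 ltac:(lra) (fun c _ => Hc c)) as [x1 [H1 _]].
  destruct (continuity_ab_maj (fun x => - f x) 0 1 ltac:(lra)
     (fun c _ => continuity_pt_opp f c (Hc c))) as [x2 [H2 _]].
  exists (Rmax (f x1) (- f x2)). intros x.
  destruct (archimed x) as [h1 h2].
  set (y := x - IZR (up x) + 1).
  assert (Hy : 0 <= y <= 1) by (unfold y; lra).
  assert (E : f x = f y).
  { assert (Ex : x = y + IZR (up x - 1)) by (rewrite minus_IZR; unfold y; ring).
    rewrite Ex at 1. apply per_Z; auto. }
  rewrite E. specialize (H1 y Hy). specialize (H2 y Hy).
  apply Rabs_le. split.
  - pose proof (Rmax_r (f x1) (- f x2)). lra.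
  - pose proof (Rmax_l (f x1) (- f x2)). lra.
Qed.

Lemma borel_empty : borel (fun _ => False).
Proof. apply borel_open. intros x []. Qed.

Lemma borel_full : borel (fun _ => True).
Proof. apply borel_open. intros x _. exists (mkposreal 1 Rlt_0_1). intros y _; exact I. Qed.

Lemma borel_ext' (A B : R -> Prop) : borel A -> (forall x, A x <-> B x) -> borel B.
Proof. intros H E; exact (borel_ext A B E H). Qed.

Lemma borel_union2 A B : borel A -> borel B -> borel (fun x => A x \/ B x).
Proof.
  intros HA HB.
  apply borel_ext' with (fun x => exists n, (fun n => if Nat.eqb n 0 then A else B) n x).
  - apply borel_union. intros [|n]; simpl; auto.
  - intros x; split.
    + intros [[|n] H]; simpl in H; auto.
    + intros [H|H]; [exists 0%nat | exists 1%nat]; simpl; auto.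
Qed.

Lemma borel_compl' A : borel A -> borel (fun x => ~ A x).
Proof. apply borel_compl. Qed.

Lemma borel_inter2 A B : borel A -> borel B -> borel (fun x => A x /\ B x).
Proof.
  intros HA HB.
  apply borel_ext' with (fun x => ~ (~ A x \/ ~ B x)).
  - apply borel_compl, borel_union2; apply borel_compl; auto.
  - intros x; split.
    + intros H. split; apply NNPP; intro; apply H; auto.
    + intros [a c] [H|H]; auto.
Qed.

Lemma borel_cinter (A : nat -> R -> Prop) : (forall n, borel (A n)) ->
  borel (fun x => forall n, A n x).
Proof.
  intros HA.
  apply borel_ext' with (fun x => ~ exists n, ~ A n x).
  - apply borel_compl, borel_union. intros n; apply borel_compl; auto.
  - intros x; split.
    + intros H n. apply NNPP; intro; apply H; eauto.
    + intros H [n Hn]; auto.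
Qed.

Lemma open_gt c : open_set (fun y => c < y).
Proof.
  intros x Hx. assert (Hp : 0 < x - c) by lra.
  exists (mkposreal _ Hp). intros y Hy. unfold disc in Hy; simpl in Hy.
  apply Rabs_def2 in Hy. lra.
Qed.

Lemma open_lt c : open_set (fun y => y < c).
Proof.
  intros x Hx. assert (Hp : 0 < c - x) by lra.
  exists (mkposreal _ Hp). intros y Hy. unfold disc in Hy; simpl in Hy.
  apply Rabs_def2 in Hy. lra.
Qed.

Lemma borel_preim (f : R -> R) : continuity f ->
  forall A, borel A -> borel (fun x => A (f x)).
Proof.
  intros Hf A HA. induction HA.
  - apply borel_open. apply (proj1 (continuity_P3 f) Hf). exact H.
  - apply borel_compl. exact IHHA.
  - apply borel_union. exact H0.
  - apply borel_ext' with (fun x => A (f x)); auto.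
Qed.

Lemma borel_le_cont (h : R -> R) c : continuity h -> borel (fun x => h x <= c).
Proof.
  intros Hh. apply borel_ext' with (fun x => ~ (c < h x)).
  - apply borel_compl. apply borel_open.
    apply (proj1 (continuity_P3 h) Hh). apply open_gt.
  - intros x; split; intros; lra.
Qed.

Lemma borel_in01 : borel in01.
Proof.
  apply borel_ext' with (fun x => ~ (x < 0) /\ x < 1).
  - apply borel_inter2. apply borel_compl, borel_open, open_lt. apply borel_open, open_lt.
  - unfold in01; intros x; split; intros; lra.
Qed.

Definition BP (P : R -> Prop) := borel (fun x => in01 x /\ P x).

Lemma BP_and P Q : BP P -> BP Q -> BP (fun x => P x /\ Q x).
Proof.
  intros HP HQ. unfold BP.
  apply borel_ext' with (fun x => (in01 x /\ P x) /\ (in01 x /\ Q x)).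
  - apply borel_inter2; auto.
  - intros x; tauto.
Qed.

Lemma BP_or P Q : BP P -> BP Q -> BP (fun x => P x \/ Q x).
Proof.
  intros HP HQ. unfold BP.
  apply borel_ext' with (fun x => (in01 x /\ P x) \/ (in01 x /\ Q x)).
  - apply borel_union2; auto.
  - intros x; tauto.
Qed.

Lemma BP_not P : BP P -> BP (fun x => ~ P x).
Proof.
  intros HP. unfold BP.
  apply borel_ext' with (fun x => in01 x /\ ~ (in01 x /\ P x)).
  - apply borel_inter2; [apply borel_in01| apply borel_compl; auto].
  - intros x; tauto.
Qed.

Lemma BP_borel P : borel P -> BP P.
Proof. intros; apply borel_inter2; auto using borel_in01. Qed.

Lemma BP_ext P Q : BP P -> (forall x, in01 x -> (P x <-> Q x)) -> BP Q.
Proof.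
  intros HP E. unfold BP. apply borel_ext' with (fun x => in01 x /\ P x); auto.
  intros x; split; intros [H1 H2]; split; auto; apply E; auto.
Qed.

Lemma BP_const (P : Prop) : BP (fun _ => P).
Proof.
  destruct (classic P) as [H|H].
  - apply BP_ext with (fun _ => True). apply BP_borel, borel_full. intros; tauto.
  - apply BP_ext with (fun _ => False). apply BP_borel, borel_empty. intros; tauto.
Qed.

Lemma BP_exists_list {T} (l : list T) (P : T -> R -> Prop) :
  (forall a, In a l -> BP (P a)) -> BP (fun x => exists a, In a l /\ P a x).
Proof.
  induction l as [|a l IH]; intros H.
  - apply BP_ext with (fun _ => False). apply BP_const. intros x _; split; [tauto|].
    intros [a [[] _]].
  - apply BP_ext with (fun x => P a x \/ exists a', In a' l /\ P a' x).
    + apply BP_or. apply H; simpl; auto. apply IH; intros; apply H; simpl; auto.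
    + intros x _; split.
      * intros [Hx|[a' [Ha' Hx]]]; [exists a| exists a']; simpl; auto.
      * intros [a' [[<-|Ha'] Hx]]; auto. right; eauto.
Qed.

Lemma BP_cinter (P : nat -> R -> Prop) : (forall n, BP (P n)) -> BP (fun x => forall n, P n x).
Proof.
  intros H. unfold BP.
  apply borel_ext' with (fun x => in01 x /\ forall n, in01 x /\ P n x).
  - apply borel_inter2. apply borel_in01. apply borel_cinter; auto.
  - intros x; split; [intros [h1 h2]; split; auto; apply h2 | intros [h1 h2]; split; auto; intro n; split; auto].
Qed.

Lemma meas_const c : measurable01 (fun _ => c).
Proof. intros B HB. apply (BP_const (B c)). Qed.

Lemma meas_if (P : R -> Prop) f g : BP P -> measurable01 f -> measurable01 g ->
  measurable01 (fun x => if excluded_middle_informative (P x) then f x else g x).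
Proof.
  intros HP Hf Hg B HB.
  apply borel_ext' with (fun x => (in01 x /\ P x) /\ (in01 x /\ B (f x)) \/
                                   (in01 x /\ ~ P x) /\ (in01 x /\ B (g x))).
  - apply borel_union2; apply borel_inter2; auto. apply BP_not; auto.
  - intros x; destruct (excluded_middle_informative (P x)); tauto.
Qed.

Lemma words_iff b q p : In p (words b q) <-> is_word b q p.
Proof.
  revert p. induction q as [|q IH]; intros p; simpl.
  - split.
    + intros [<-|[]]. split; auto.
    + intros [H _]. destruct p; simpl in H; try lia. auto.
  - rewrite in_flat_map. split.
    + intros [d [Hd Hp]]. apply in_map_iff in Hp. destruct Hp as [p' [<- Hp']].
      apply IH in Hp'. destruct Hp' as [H1 H2]. apply in_seq in Hd.
      split. simpl; lia. constructor; auto. lia.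
    + intros [H1 H2]. destruct p as [|d p']; simpl in H1; try lia.
      inversion H2; subst. exists d. split. apply in_seq; lia.
      apply in_map. apply IH. split; auto.
Qed.

Lemma words_nodup b q : NoDup (words b q).
Proof.
  induction q as [|q IH]; simpl.
  - constructor; auto. constructor.
  - generalize (words b q) IH. clear IH. intros W HW. generalize 0%nat. induction b as [|n IHb]; intros s; simpl.
    + constructor.
    + apply NoDup_app.
      * apply NoDup_map_NoDup_ForallPairs; auto. intros x y _ _ H; inversion H; auto.
      * apply IHb.
      * intros x Hx Hy. apply in_map_iff in Hx. destruct Hx as [p [<- _]].
        apply in_flat_map in Hy. destruct Hy as [d [Hd Hp]]. apply in_seq in Hd.
        apply in_map_iff in Hp. destruct Hp as [p' [E _]]. inversion E. lia.
Qed.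

Definition lf (p : list nat) : nat -> nat := fun n => nth n p 0%nat.

Lemma map_seq_word b N (f : nat -> nat) : (forall j, (j < N)%nat -> (f j < b)%nat) ->
  In (map f (seq 0 N)) (words b N).
Proof.
  intros H. apply words_iff. split. rewrite length_map, length_seq; auto.
  apply Forall_forall. intros x Hx. apply in_map_iff in Hx. destruct Hx as [j [<- Hj]].
  apply in_seq in Hj. apply H. lia.
Qed.

Lemma map_seq_lf N (f : nat -> nat) j : (j < N)%nat -> lf (map f (seq 0 N)) j = f j.
Proof.
  intros H. unfold lf. rewrite nth_indep with (d' := f 0%nat) by (rewrite length_map, length_seq; auto).
  rewrite map_nth, seq_nth; auto.
Qed.

Lemma words_valid b N p : In p (words b N) -> forall j, (j < N)%nat -> (lf p j < b)%nat.
Proof.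
  intros H j Hj. apply words_iff in H. destruct H as [H1 H2]. unfold lf.
  rewrite Forall_forall in H2. apply H2. apply nth_In. lia.
Qed.

Lemma dpl_eq f x l l' : derivable_pt_lim f x l -> l = l' -> derivable_pt_lim f x l'.
Proof. intros H ->; auto. Qed.

Lemma dpl_pc D y : derivable_pt_lim (fun z => z + D) y 1.
Proof.
  assert (H := derivable_pt_lim_plus id (fct_cte D) y 1 0
       (derivable_pt_lim_id y) (derivable_pt_lim_const D y)).
  rewrite Rplus_0_r in H. exact H.
Qed.

Lemma dpl_affine D B y : B <> 0 -> derivable_pt_lim (fun z => (z + D) / B) y (/ B).
Proof.
  intros HB.
  assert (H := derivable_pt_lim_scal (fun z => z + D) (/ B) y 1 (dpl_pc D y)).
  unfold mult_real_fct in H.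
  eapply dpl_eq.
  - replace (fun z => (z + D) / B) with (fun z => / B * (z + D)).
    exact H. apply functional_extensionality; intros; unfold Rdiv; ring.
  - ring.
Qed.

Lemma Rabs_def2b a c : Rabs a <= c -> - c <= a <= c.
Proof. unfold Rabs. destruct (Rcase_abs a); intros; lra. Qed.

Definition agree (m : nat) (f f' : nat -> nat) := forall j, (j < m)%nat -> f j = f' j.
Definition valid (b m : nat) (f : nat -> nat) := forall j, (j < m)%nat -> (f j < b)%nat.

Lemma lim_geo a c K g q : 0 <= g < 1 -> 0 <= K -> (forall N, a <= c + K * g ^ (N + q)) -> a <= c.
Proof.
  intros hg hK H. apply le_eps. intros e He.
  destruct (pow_lt_1_zero g ltac:(rewrite Rabs_right; lra) (e / (K + 1))) as [N HN].
  { apply Rdiv_lt_0_compat; lra. }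
  specialize (HN (N + q)%nat ltac:(lia)). rewrite Rabs_right in HN by (apply Rle_ge, pow_le; lra).
  specialize (H N).
  assert (K * g ^ (N + q) <= (K + 1) * g ^ (N + q)).
  { apply Rmult_le_compat_r. apply pow_le; lra. lra. }
  assert ((K + 1) * g ^ (N + q) < e).
  { apply Rmult_lt_reg_r with (/ (K + 1)). apply Rinv_0_lt_compat; lra.
    replace ((K + 1) * g ^ (N + q) * / (K + 1)) with (g ^ (N + q)) by (field; lra).
    unfold Rdiv in HN. lra. }
  lra.
Qed.

Lemma finite_bound (Q : nat -> nat -> Prop) n :
  (forall d, (d < n)%nat -> exists N, Q d N) ->
  (forall d N N', (N <= N')%nat -> Q d N -> Q d N') ->
  exists N, forall d, (d < n)%nat -> Q d N.
Proof.
  intros H Hm. induction n as [|n IH].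
  - exists 0%nat. intros; lia.
  - destruct IH as [N1 HN1]. { intros; apply H; lia. }
    destruct (H n ltac:(lia)) as [N2 HN2].
    exists (max N1 N2). intros d Hd. destruct (Nat.eq_dec d n) as [->|].
    + apply Hm with N2; auto; lia.
    + apply Hm with N1; auto. lia. apply HN1; lia.
Qed.

Section Series.
Variables (b : nat) (gam : R) (psi psi' : R -> R).
Hypothesis hb : (2 <= b)%nat.
Hypothesis hgam : 0 < gam < 1.
Hypothesis hper : forall x, psi (x + 1) = psi x.
Hypothesis hder : forall x, derivable_pt_lim psi x (psi' x).
Hypothesis hcont : continuity psi'.

Lemma INRb_pos : 1 <= INR b.
Proof. apply (le_INR 1 b). lia. Qed.

Lemma Bpow_ge1 n : 1 <= INR b ^ n.
Proof. pose proof INRb_pos. induction n; simpl; nra. Qed.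

Lemma psi_cont : continuity psi.
Proof. intros x. apply derivable_continuous_pt. exists (psi' x). apply hder. Qed.

Lemma psi'_per x : psi' (x + 1) = psi' x.
Proof.
  apply (uniqueness_limite psi x).
  - assert (H := derivable_pt_lim_comp (fun y => y + 1) psi x 1 (psi' (x + 1))
      (dpl_pc 1 x) (hder (x+1))).
    unfold comp in H. rewrite Rmult_1_r in H.
    replace psi with (fun y => psi (y + 1)) at 1. exact H.
    apply functional_extensionality; auto.
  - apply hder.
Qed.

Definition M0 := proj1_sig (constructive_indefinite_description _ (per_bound psi hper psi_cont)).
Lemma M0_spec x : Rabs (psi x) <= M0.
Proof. unfold M0. destruct constructive_indefinite_description; simpl; auto. Qed.
Definition M1 := proj1_sig (constructive_indefinite_description _ (per_bound psi' psi'_per hcont)).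
Lemma M1_spec x : Rabs (psi' x) <= M1.
Proof. unfold M1. destruct constructive_indefinite_description; simpl; auto. Qed.

Definition Stermd (x : R) (i : nat -> nat) (n : nat) : R :=
  gam ^ n * psi' ((x + digval b i (S n)) / INR b ^ S n) / INR b ^ S n.

Definition SD (x : R) (i : nat -> nat) : R :=
  epsilon (inhabits 0) (fun l => infinite_sum (Stermd x i) l).

Lemma Sterm_bound x i n : Rabs (Sterm b gam psi x i n) <= M0 * gam ^ n.
Proof.
  unfold Sterm. rewrite Rabs_mult, Rabs_right by (apply Rle_ge, pow_le; lra).
  rewrite Rmult_comm. apply Rmult_le_compat_r. apply pow_le; lra. apply M0_spec.
Qed.

Lemma Stermd_bound x i n : Rabs (Stermd x i n) <= M1 * gam ^ n.
Proof.
  unfold Stermd. pose proof (Bpow_ge1 (S n)).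
  unfold Rdiv. rewrite !Rabs_mult, Rabs_right by (apply Rle_ge, pow_le; lra).
  rewrite (Rabs_right (/ _)) by (apply Rle_ge; left; apply Rinv_0_lt_compat; lra).
  assert (0 < / INR b ^ S n <= 1).
  { split. apply Rinv_0_lt_compat; lra. rewrite <- Rinv_1. apply Rinv_le_contravar; lra. }
  pose proof (M1_spec ((x + digval b i (S n)) * / INR b ^ S n)).
  pose proof (pow_le gam n ltac:(lra)). pose proof (Rabs_pos (psi' ((x + digval b i (S n)) * / INR b ^ S n))).
  rewrite (Rmult_comm M1).
  apply Rle_trans with (gam ^ n * Rabs (psi' ((x + digval b i (S n)) * / INR b ^ S n)) * 1).
  apply Rmult_le_compat_l. apply Rmult_le_pos; lra. lra.
  rewrite Rmult_1_r. apply Rmult_le_compat_l; lra.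
Qed.

Lemma gam01 : 0 <= gam < 1.
Proof. lra. Qed.

Lemma Sfun_sum x i : infinite_sum (Sterm b gam psi x i) (Sfun b gam psi x i).
Proof. apply (eps_spec _ M0 gam gam01 (Sterm_bound x i)). Qed.

Lemma SD_sum x i : infinite_sum (Stermd x i) (SD x i).
Proof. apply (eps_spec _ M1 gam gam01 (Stermd_bound x i)). Qed.

Lemma Sfun_tail x i n : Rabs (Sfun b gam psi x i - sum_f_R0 (Sterm b gam psi x i) n)
   <= M0 * gam ^ (n + 1) / (1 - gam).
Proof. apply (tail_bound _ M0 gam gam01 (Sterm_bound x i)). apply Sfun_sum. Qed.

Lemma SD_tail x i n : Rabs (SD x i - sum_f_R0 (Stermd x i) n)
   <= M1 * gam ^ (n + 1) / (1 - gam).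
Proof. apply (tail_bound _ M1 gam gam01 (Stermd_bound x i)). apply SD_sum. Qed.

Lemma Sterm_der i n y : derivable_pt_lim (fun z => Sterm b gam psi z i n) y (Stermd y i n).
Proof.
  unfold Sterm, Stermd. pose proof (Bpow_ge1 (S n)) as HB1.
  assert (Hc := derivable_pt_lim_comp _ psi y _ _
     (dpl_affine (digval b i (S n)) (INR b ^ S n) y ltac:(lra)) (hder _)).
  assert (H2 := derivable_pt_lim_scal _ (gam ^ n) y _ Hc).
  unfold mult_real_fct, comp in H2. eapply dpl_eq. exact H2. field. lra.
Qed.

Lemma psum_der i n y : derivable_pt_lim (fun z => sum_f_R0 (fun k => Sterm b gam psi z i k) n) y
   (sum_f_R0 (Stermd y i) n).
Proof.
  induction n as [|n IH].
  - simpl. apply Sterm_der.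
  - simpl. apply (derivable_pt_lim_plus (fun z => sum_f_R0 (fun k => Sterm b gam psi z i k) n)
       (fun z => Sterm b gam psi z i (S n))); auto. apply Sterm_der.
Qed.

Lemma Sfun_der x i : derivable_pt_lim (fun y => Sfun b gam psi y i) x (SD x i).
Proof.
  apply (CVU_derivable (fun n z => sum_f_R0 (fun k => Sterm b gam psi z i k) n)
    (fun n z => sum_f_R0 (Stermd z i) n) (fun y => Sfun b gam psi y i) (fun y => SD y i) x
    (mkposreal 1 Rlt_0_1)).
  - intros e He.
    assert (HM1 : 0 <= M1) by exact (C_nonneg _ M1 gam (Stermd_bound x i)).
    destruct (pow_lt_1_zero gam ltac:(rewrite Rabs_right; lra) (e * (1 - gam) / (M1 + 1)))
      as [N HN].
    { apply Rdiv_lt_0_compat; try lra. apply Rmult_lt_0_compat; lra. }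
    exists N. intros n y Hn _.
    eapply Rle_lt_trans. apply SD_tail.
    specialize (HN (n + 1)%nat ltac:(lia)). rewrite Rabs_right in HN.
    2: { apply Rle_ge, pow_le; lra. }
    apply Rmult_lt_reg_r with (1 - gam). lra.
    unfold Rdiv. rewrite Rmult_assoc, Rinv_l, Rmult_1_r by lra.
    apply Rle_lt_trans with ((M1+1) * gam ^ (n + 1)).
    { apply Rmult_le_compat_r. apply pow_le; lra. lra. }
    apply Rmult_lt_reg_r with (/ (M1 + 1)). apply Rinv_0_lt_compat; lra.
    replace ((M1 + 1) * gam ^ (n + 1) * / (M1 + 1)) with (gam ^ (n + 1)) by (field; lra).
    unfold Rdiv in HN. lra.
  - intros y _. apply Sfun_sum.
  - intros n y _. apply psum_der.
  - unfold Boule; simpl. rewrite Rminus_diag, Rabs_R0. lra.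
Qed.

Lemma Sder_eq x i : Sder b gam psi x i = SD x i.
Proof.
  unfold Sder. apply (uniqueness_limite (fun y => Sfun b gam psi y i) x).
  - apply epsilon_spec. exists (SD x i). apply Sfun_der.
  - apply Sfun_der.
Qed.

Lemma digval_ext i j m : (forall k, (k <= m)%nat -> i k = j k) -> digval b i m = digval b j m.
Proof.
  intros H. unfold digval. rewrite (H m) by lia.
  f_equal. apply sum_eq. intros k Hk. rewrite H; auto.
Qed.

Lemma digval_S i m : digval b i (S m) = sum_f_R0 (fun k => INR (i k) * INR b ^ k) m.
Proof. unfold digval. rewrite tech5. ring. Qed.

Lemma digval_extS i j m : (forall k, (k <= m)%nat -> i k = j k) -> digval b i (S m) = digval b j (S m).
Proof.
  intros H. rewrite !digval_S. apply sum_eq. intros k Hk. rewrite H; auto.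
Qed.

Lemma psum_ext x i j N : (forall k, (k <= N)%nat -> i k = j k) ->
  sum_f_R0 (Sterm b gam psi x i) N = sum_f_R0 (Sterm b gam psi x j) N.
Proof.
  intros H. apply sum_eq. intros n Hn. unfold Sterm.
  rewrite (digval_extS i j n); auto. intros; apply H; lia.
Qed.

Lemma psumd_ext x i j N : (forall k, (k <= N)%nat -> i k = j k) ->
  sum_f_R0 (Stermd x i) N = sum_f_R0 (Stermd x j) N.
Proof.
  intros H. apply sum_eq. intros n Hn. unfold Stermd.
  rewrite (digval_extS i j n); auto. intros; apply H; lia.
Qed.

Lemma cont_affine D B : B <> 0 -> continuity (fun z => (z + D) / B).
Proof. intros HB y. apply derivable_continuous_pt. exists (/ B). apply dpl_affine; auto. Qed.

Lemma psum_cont i N : continuity (fun x => sum_f_R0 (Sterm b gam psi x i) N).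
Proof.
  intros y. apply derivable_continuous_pt. exists (sum_f_R0 (Stermd y i) N).
  apply psum_der.
Qed.

Lemma termd_cont i n : continuity (fun x => Stermd x i n).
Proof.
  intros y. unfold Stermd. pose proof (Bpow_ge1 (S n)).
  apply (continuity_pt_div (fun x => gam ^ n * psi' ((x + digval b i (S n)) / INR b ^ S n)) (fct_cte _)).
  apply (continuity_pt_mult (fct_cte _)). apply continuity_pt_const. intros a c; auto.
  apply (continuity_pt_comp (fun x => (x + digval b i (S n)) / INR b ^ S n) psi').
  apply cont_affine; lra. apply hcont. apply continuity_pt_const. intros a c; auto.
  unfold fct_cte. change (INR b ^ S n <> 0). lra.
Qed.

Lemma psumd_cont i N : continuity (fun x => sum_f_R0 (Stermd x i) N).
Proof.
  induction N as [|N IH]; intros y.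
  - apply termd_cont.
  - apply (continuity_pt_plus (fun x => sum_f_R0 (Stermd x i) N) (fun x => Stermd x i (S N))).
    apply IH. apply termd_cont.
Qed.

Section Konig.
Variables (q : nat) (eps del : R) (k l : list nat).
Hypothesis hq : (1 <= q)%nat.
Hypothesis hk : length k = q.
Hypothesis hl : length l = q.


Definition T (w : list nat) N x f := sum_f_R0 (Sterm b gam psi x (Defs.concat w f)) (N + q - 1).
Definition Td (w : list nat) N x f := sum_f_R0 (Stermd x (Defs.concat w f)) (N + q - 1).
Definition eN N := M0 * gam ^ (N + q) / (1 - gam).
Definition edN N := M1 * gam ^ (N + q) / (1 - gam).

Definition G N x f g :=
  Rabs (T k N x f - T l N x g) <= eps + 2 * eN N /\
  Rabs (Td k N x f - Td l N x g) <= del + 2 * edN N.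

Lemma concat_agree w N f f' : length w = q -> agree N f f' ->
  forall j, (j <= N + q - 1)%nat -> Defs.concat w f j = Defs.concat w f' j.
Proof.
  intros Hw Ha j Hj. unfold Defs.concat. rewrite Hw.
  destruct (Nat.ltb_spec j q); auto. apply Ha. lia.
Qed.

Lemma T_agree w N x f f' : length w = q -> agree N f f' -> T w N x f = T w N x f'.
Proof. intros Hw Ha. unfold T. apply psum_ext. intros; apply concat_agree with N; auto. Qed.

Lemma Td_agree w N x f f' : length w = q -> agree N f f' -> Td w N x f = Td w N x f'.
Proof. intros Hw Ha. unfold Td. apply psumd_ext. intros; apply concat_agree with N; auto. Qed.

Lemma G_agree N x f g f' g' : agree N f f' -> agree N g g' -> G N x f g -> G N x f' g'.
Proof.
  intros H1 H2. unfold G. rewrite (T_agree k N x f f'), (T_agree l N x g g'),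
    (Td_agree k N x f f'), (Td_agree l N x g g'); auto.
Qed.

Lemma Sfun_T w N x f : Rabs (Sfun b gam psi x (Defs.concat w f) - T w N x f) <= eN N.
Proof.
  unfold T, eN. eapply Rle_trans. apply Sfun_tail.
  replace (N + q - 1 + 1)%nat with (N + q)%nat by lia. right; reflexivity.
Qed.

Lemma Sder_Td w N x f : Rabs (Sder b gam psi x (Defs.concat w f) - Td w N x f) <= edN N.
Proof.
  rewrite Sder_eq.
  unfold Td, edN. eapply Rle_trans. apply SD_tail.
  replace (N + q - 1 + 1)%nat with (N + q)%nat by lia. right; reflexivity.
Qed.

Lemma abs4 a1 a2 t1 t2 c e : Rabs (a1 - t1) <= e -> Rabs (a2 - t2) <= e ->
  Rabs (a1 - a2) <= c -> Rabs (t1 - t2) <= c + 2 * e.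
Proof.
  intros H1 H2 H3. apply Rabs_def2b in H1. apply Rabs_def2b in H2. apply Rabs_def2b in H3.
  apply Rabs_le. lra.
Qed.

Lemma tangent_G x f g : tangent b gam psi eps del x (Defs.concat k f) (Defs.concat l g) -> forall N, G N x f g.
Proof.
  intros [H1 H2] N. split.
  - apply abs4 with (Sfun b gam psi x (Defs.concat k f)) (Sfun b gam psi x (Defs.concat l g)); auto; apply Sfun_T.
  - apply abs4 with (Sder b gam psi x (Defs.concat k f)) (Sder b gam psi x (Defs.concat l g)); auto; apply Sder_Td.
Qed.

Lemma M0_nn : 0 <= M0.
Proof. pose proof (M0_spec 0). pose proof (Rabs_pos (psi 0)). lra. Qed.
Lemma M1_nn : 0 <= M1.
Proof. pose proof (M1_spec 0). pose proof (Rabs_pos (psi' 0)). lra. Qed.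

Lemma G_tangent x f g : (forall N, G N x f g) -> tangent b gam psi eps del x (Defs.concat k f) (Defs.concat l g).
Proof.
  intros H. split.
  - apply lim_geo with (K := 4 * M0 / (1 - gam)) (g := gam) (q := q).
    lra. apply Rmult_le_pos. pose proof M0_nn; lra. left; apply Rinv_0_lt_compat; lra.
    intros N. destruct (H N) as [H1 _].
    pose proof (Sfun_T k N x f). pose proof (Sfun_T l N x g).
    apply Rabs_def2b in H0. apply Rabs_def2b in H2. apply Rabs_def2b in H1.
    unfold eN in *. apply Rabs_le.
    replace (4 * M0 / (1 - gam) * gam ^ (N + q)) with (4 * (M0 * gam ^ (N + q) / (1 - gam))) by (field; lra).
    lra.
  - apply lim_geo with (K := 4 * M1 / (1 - gam)) (g := gam) (q := q).
    lra. apply Rmult_le_pos. pose proof M1_nn; lra. left; apply Rinv_0_lt_compat; lra.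
    intros N. destruct (H N) as [_ H1].
    pose proof (Sder_Td k N x f). pose proof (Sder_Td l N x g).
    apply Rabs_def2b in H0. apply Rabs_def2b in H2. apply Rabs_def2b in H1.
    unfold edN in *. apply Rabs_le.
    replace (4 * M1 / (1 - gam) * gam ^ (N + q)) with (4 * (M1 * gam ^ (N + q) / (1 - gam))) by (field; lra).
    lra.
Qed.

Lemma G_restrict x f g m N : (m <= N)%nat -> G N x f g -> G m x f g.
Proof.
  intros Hm [H1 H2].
  assert (Hg : 0 <= gam < 1) by lra.
  split.
  - pose proof (geom_diff' _ M0 gam Hg (Sterm_bound x (Defs.concat k f)) (m + q - 1) (N + q - 1) ltac:(lia)).
    pose proof (geom_diff' _ M0 gam Hg (Sterm_bound x (Defs.concat l g)) (m + q - 1) (N + q - 1) ltac:(lia)).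
        replace (m + q - 1 + 1)%nat with (m + q)%nat in H, H0 by lia.
    replace (N + q - 1 + 1)%nat with (N + q)%nat in H, H0 by lia.
    unfold T, eN in *.
    apply Rabs_def2b in H. apply Rabs_def2b in H0. apply Rabs_def2b in H1. apply Rabs_le.
    replace (M0 * (gam ^ (m + q) - gam ^ (N + q)) / (1 - gam)) with
      (M0 * gam ^ (m + q) / (1 - gam) - M0 * gam ^ (N + q) / (1 - gam)) in H, H0 by (field; lra).
    lra.
  - pose proof (geom_diff' _ M1 gam Hg (Stermd_bound x (Defs.concat k f)) (m + q - 1) (N + q - 1) ltac:(lia)).
    pose proof (geom_diff' _ M1 gam Hg (Stermd_bound x (Defs.concat l g)) (m + q - 1) (N + q - 1) ltac:(lia)).
        replace (m + q - 1 + 1)%nat with (m + q)%nat in H, H0 by lia.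
    replace (N + q - 1 + 1)%nat with (N + q)%nat in H, H0 by lia.
    unfold Td, edN in *.
    apply Rabs_def2b in H. apply Rabs_def2b in H0. apply Rabs_def2b in H2. apply Rabs_le.
    replace (M1 * (gam ^ (m + q) - gam ^ (N + q)) / (1 - gam)) with
      (M1 * gam ^ (m + q) / (1 - gam) - M1 * gam ^ (N + q) / (1 - gam)) in H, H0 by (field; lra).
    lra.
Qed.

Definition P N x f g := valid b N f /\ valid b N g /\ G N x f g.

Definition Ext x m f g := valid b m f /\ valid b m g /\
  forall N, (m <= N)%nat -> exists f' g', agree m f f' /\ agree m g g' /\ P N x f' g'.

Definition upd (f : nat -> nat) m d := fun j => if Nat.eqb j m then d else f j.

Lemma P_restrict N m x f g : (m <= N)%nat -> P N x f g -> P m x f g.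
Proof.
  intros H [h1 [h2 h3]]. split; [|split].
  - intros j Hj; apply h1; lia.
  - intros j Hj; apply h2; lia.
  - eapply G_restrict; eauto.
Qed.

Lemma ext_step x m f g : Ext x m f g ->
  exists d1 d2, (d1 < b)%nat /\ (d2 < b)%nat /\ Ext x (S m) (upd f m d1) (upd g m d2).
Proof.
  intros [hf [hg HE]]. apply NNPP. intros Hn.
  set (Bad := fun d1 d2 N => (S m <= N)%nat /\ forall f' g', agree (S m) (upd f m d1) f' ->
     agree (S m) (upd g m d2) g' -> ~ P N x f' g').
  assert (Hup : forall d1 d2 N N', (N <= N')%nat -> Bad d1 d2 N -> Bad d1 d2 N').
  { intros d1 d2 N N' HN [h1 h2]. split. lia. intros f' g' a1 a2 HP.
    apply (h2 f' g' a1 a2). eapply P_restrict; eauto. }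
  assert (Hb : forall d1 d2, (d1 < b)%nat -> (d2 < b)%nat -> exists N, Bad d1 d2 N).
  { intros d1 d2 H1 H2. apply NNPP. intros Hc. apply Hn. exists d1, d2. split; auto. split; auto.
    split; [|split].
    - intros j Hj. unfold upd. destruct (Nat.eqb_spec j m); auto. apply hf; lia.
    - intros j Hj. unfold upd. destruct (Nat.eqb_spec j m); auto. apply hg; lia.
    - intros N HN. apply NNPP. intros Hc2. apply Hc. exists N. split; auto.
      intros f' g' a1 a2 HP. apply Hc2. exists f', g'. auto. }
  destruct (finite_bound (fun d1 N => forall d2, (d2 < b)%nat -> Bad d1 d2 N) b) as [N HN].
  - intros d1 Hd1. apply (finite_bound (fun d2 N => Bad d1 d2 N) b).
    + intros d2 Hd2. apply Hb; auto.
    + intros d N N' H1 H2. eapply Hup; eauto.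
  - intros d1 N N' H1 H2 d2 Hd2. eapply Hup; eauto.
  - destruct (HE (max N (S m)) ltac:(lia)) as [f' [g' [a1 [a2 HP]]]].
    assert (Hf' : (f' m < b)%nat) by (apply (proj1 HP); lia).
    assert (Hg' : (g' m < b)%nat) by (apply (proj1 (proj2 HP)); lia).
    assert (HB := HN (f' m) Hf' (g' m) Hg').
    apply (Hup (f' m) (g' m) N (max N (S m)) ltac:(lia)) in HB.
    destruct HB as [_ HB]. apply (HB f' g'); auto.
    + intros j Hj. unfold upd. destruct (Nat.eqb_spec j m). subst; auto. apply a1; lia.
    + intros j Hj. unfold upd. destruct (Nat.eqb_spec j m). subst; auto. apply a2; lia.
Qed.

Definition nxt x m (fg : (nat -> nat) * (nat -> nat)) :=
  epsilon (inhabits fg) (fun fg' => Ext x (S m) (fst fg') (snd fg') /\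
     agree m (fst fg) (fst fg') /\ agree m (snd fg) (snd fg')).

Fixpoint Fs x m : (nat -> nat) * (nat -> nat) :=
  match m with
  | O => (fun _ => 0%nat, fun _ => 0%nat)
  | S m' => nxt x m' (Fs x m')
  end.

Lemma agree_upd f m d : agree m f (upd f m d).
Proof. intros j Hj. unfold upd. destruct (Nat.eqb_spec j m); auto; lia. Qed.

Lemma Fs_spec x : (forall N, exists f g, P N x f g) -> forall m,
  Ext x m (fst (Fs x m)) (snd (Fs x m)) /\
  agree m (fst (Fs x m)) (fst (Fs x (S m))) /\ agree m (snd (Fs x m)) (snd (Fs x (S m))).
Proof.
  intros H0.
  assert (HE : forall m, Ext x m (fst (Fs x m)) (snd (Fs x m))).
  { induction m as [|m IH].
    - split; [|split]; try (intros j Hj; lia).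
      intros N _. destruct (H0 N) as [f [g HP]]. exists f, g. split; [|split]; auto; intros j Hj; lia.
    - simpl. unfold nxt.
      pose proof (epsilon_spec (inhabits (Fs x m)) (fun fg' => Ext x (S m) (fst fg') (snd fg') /\
         agree m (fst (Fs x m)) (fst fg') /\ agree m (snd (Fs x m)) (snd fg'))) as Hs.
      apply Hs. destruct (ext_step _ _ _ _ IH) as [d1 [d2 [_ [_ He]]]].
      exists (upd (fst (Fs x m)) m d1, upd (snd (Fs x m)) m d2). simpl.
      split; auto. split; apply agree_upd. }
  intros m. split; auto. simpl. unfold nxt.
  pose proof (epsilon_spec (inhabits (Fs x m)) (fun fg' => Ext x (S m) (fst fg') (snd fg') /\
         agree m (fst (Fs x m)) (fst fg') /\ agree m (snd (Fs x m)) (snd fg'))) as Hs.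
  refine (proj2 (Hs _)). destruct (ext_step _ _ _ _ (HE m)) as [d1 [d2 [_ [_ He]]]].
  exists (upd (fst (Fs x m)) m d1, upd (snd (Fs x m)) m d2). simpl.
  split; auto. split; apply agree_upd.
Qed.

Lemma konig x : (forall N, exists f g, P N x f g) ->
  exists s1 s2, is_seq b s1 /\ is_seq b s2 /\ forall N, G N x s1 s2.
Proof.
  intros H0. pose proof (Fs_spec x H0) as HS.
  assert (Hag : forall m m', (m <= m')%nat ->
     agree m (fst (Fs x m)) (fst (Fs x m')) /\ agree m (snd (Fs x m)) (snd (Fs x m'))).
  { intros m m' Hm. induction Hm.
    - split; intros j _; auto.
    - destruct IHHm as [h1 h2]. destruct (HS m0) as [_ [h3 h4]].
      split; intros j Hj; [rewrite h1 by lia; apply h3 | rewrite h2 by lia; apply h4]; lia. }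
  exists (fun j => fst (Fs x (S j)) j), (fun j => snd (Fs x (S j)) j).
  split; [|split].
  - intros j. destruct (HS (S j)) as [[h _] _]. apply h. lia.
  - intros j. destruct (HS (S j)) as [[_ [h _]] _]. apply h. lia.
  - intros N. destruct (HS N) as [[_ [_ HE]] _].
    destruct (HE N ltac:(lia)) as [f' [g' [a1 [a2 [_ [_ HG]]]]]].
    apply G_agree with f' g'.
    + intros j Hj. rewrite <- a1 by auto. symmetry. apply (proj1 (Hag (S j) N ltac:(lia))). lia.
    + intros j Hj. rewrite <- a2 by auto. symmetry. apply (proj2 (Hag (S j) N ltac:(lia))). lia.
    + exact HG.
Qed.

Lemma inE_char x : is_word b q k -> is_word b q l ->
  (inE b gam psi q x eps del k l <->
   forall N, exists p1, In p1 (words b N) /\ exists p2, In p2 (words b N) /\ G N x (lf p1) (lf p2)).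
Proof.
  intros Wk Wl. unfold inE. split.
  - intros [_ [_ [u [v [hu [hv ht]]]]]] N.
    exists (map u (seq 0 N)). split. apply map_seq_word; intros; apply hu.
    exists (map v (seq 0 N)). split. apply map_seq_word; intros; apply hv.
    apply G_agree with u v.
    + intros j Hj. symmetry. apply map_seq_lf; auto.
    + intros j Hj. symmetry. apply map_seq_lf; auto.
    + apply tangent_G; auto.
  - intros H. split; auto. split; auto.
    destruct (konig x) as [s1 [s2 [h1 [h2 h3]]]].
    + intros N. destruct (H N) as [p1 [i1 [p2 [i2 HG]]]]. exists (lf p1), (lf p2).
      split; [|split]; auto; intros j Hj; eapply words_valid; eauto.
    + exists s1, s2. split; auto. split; auto. apply G_tangent; auto.
Qed.

Lemma G_borel N f g : borel (fun x => G N x f g).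
Proof.
  unfold G. apply borel_inter2.
  - apply borel_ext' with (fun x => Rabs (T k N x f - T l N x g) <= eps + 2 * eN N).
    2: intros; tauto.
    apply borel_le_cont. intros y. apply continuity_pt_comp with (f2 := Rabs).
    apply (continuity_pt_minus (fun x => T k N x f) (fun x => T l N x g)); apply psum_cont.
    apply Rcontinuity_abs.
  - apply borel_ext' with (fun x => Rabs (Td k N x f - Td l N x g) <= del + 2 * edN N).
    2: intros; tauto.
    apply borel_le_cont. intros y. apply continuity_pt_comp with (f2 := Rabs).
    apply (continuity_pt_minus (fun x => Td k N x f) (fun x => Td l N x g)); apply psumd_cont.
    apply Rcontinuity_abs.
Qed.

Lemma inE_BP : BP (fun x => inE b gam psi q x eps del k l).
Proof.
  destruct (classic (is_word b q k /\ is_word b q l)) as [[Wk Wl]|Hw].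
  - apply BP_ext with (fun x => forall N, exists p1, In p1 (words b N) /\
        exists p2, In p2 (words b N) /\ G N x (lf p1) (lf p2)).
    + apply BP_cinter. intros N. apply BP_exists_list. intros p1 _.
      apply BP_exists_list. intros p2 _. apply BP_borel, G_borel.
    + intros x _. symmetry. apply inE_char; auto.
  - apply BP_ext with (fun _ => False). apply BP_const.
    intros x _. split; [tauto|]. intros [h1 [h2 _]]. tauto.
Qed.

End Konig.

End Series.

Definition Pol (t : R) := (t ^ 3 - 2) + 2 * (t ^ 2 - 1) - (t ^ 2 - 1) ^ 2 * (t ^ 3 - 2).

Lemma Pol_cont : continuity (fun t => - Pol t).
Proof. unfold Pol. reg. Qed.

Lemma t_exists : exists t, 145/100 <= t < 161/100 /\ Pol t = 0.
Proof.
  destruct (IVT (fun t => - Pol t) (145/100) (161/100) Pol_cont) as [t [[h1 h2] h3]].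
  - lra.
  - unfold Pol. simpl. lra.
  - unfold Pol. simpl. lra.
  - exists t. split; [split|]; auto; try lra.
    destruct h2 as [h2|h2]; auto. subst. unfold Pol in h3. simpl in h3. lra.
Qed.

Lemma Pol_teq t : 145/100 <= t -> Pol t = 0 -> t_eq t.
Proof.
  intros h1 h2. unfold t_eq.
  assert (A : 0 < t ^ 2 - 1) by (simpl; nra).
  assert (B : 0 < t ^ 3 - 2) by (simpl; nra).
  assert (E : / (t ^ 2 - 1) + 2 / (t ^ 3 - 2) + 1 - t ^ 2 = Pol t / ((t^2 - 1) * (t^3 - 2))).
  { unfold Pol. field. lra. }
  rewrite h2 in E. unfold Rdiv at 2 in E. rewrite Rmult_0_l in E. lra.
Qed.

Definition hfun (x : R) := / (x ^ 2 - 1) + 2 / (x ^ 3 - 2) + 1 - x ^ 2.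

Lemma hfun_dec x y : 1 < x -> 2 < x ^ 3 -> x < y -> hfun y < hfun x.
Proof.
  intros h1 h2 h3. unfold hfun.
  assert (x ^ 2 < y ^ 2) by (simpl; nra).
  assert (x ^ 3 < y ^ 3) by (simpl; nra).
  assert (0 < x ^ 2 - 1) by (simpl; nra).
  assert (/ (y ^ 2 - 1) < / (x ^ 2 - 1)).
  { apply Rinv_lt_contravar. apply Rmult_lt_0_compat; lra. lra. }
  assert (/ (y ^ 3 - 2) < / (x ^ 3 - 2)).
  { apply Rinv_lt_contravar. apply Rmult_lt_0_compat; lra. lra. }
  unfold Rdiv. lra.
Qed.

Lemma teq_hfun x : t_eq x -> hfun x = 0.
Proof. unfold t_eq, hfun. intros H. lra. Qed.

Lemma t_unique t t' : 1 < t -> 2 < t ^ 3 -> t_eq t -> 1 < t' -> 2 < t' ^ 3 -> t_eq t' -> t' = t.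
Proof.
  intros a1 a2 a3 b1 b2 b3. apply teq_hfun in a3. apply teq_hfun in b3.
  destruct (Rtotal_order t' t) as [H|[H|H]]; auto.
  - pose proof (hfun_dec t' t b1 b2 H). lra.
  - pose proof (hfun_dec t t' a1 a2 H). lra.
Qed.

Definition rsum {A} (l : list A) (f : A -> R) := fold_right Rplus 0 (map f l).

Lemma rsum_app {A} (l1 l2 : list A) f : rsum (l1 ++ l2) f = rsum l1 f + rsum l2 f.
Proof. unfold rsum. induction l1; simpl; [lra|]. rewrite IHl1. lra. Qed.

Lemma rsum_nonneg {A} (l : list A) f : (forall v, 0 <= f v) -> 0 <= rsum l f.
Proof. intros H. unfold rsum. induction l; simpl; auto. lra. specialize (H a). lra. Qed.

Lemma sum_support {A} (l S : list A) f : NoDup l -> NoDup S -> (forall v, 0 <= f v) ->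
  (forall v, In v l -> f v <> 0 -> In v S) -> rsum l f <= rsum S f.
Proof.
  revert S. induction l as [|a l IH]; intros S Hl HS Hf Hsup.
  - apply rsum_nonneg; auto.
  - apply NoDup_cons_iff in Hl. destruct Hl as [Ha Hl].
    change (rsum (a :: l) f) with (f a + rsum l f).
    destruct (Req_dec (f a) 0) as [E|E].
    + rewrite E, Rplus_0_l. apply IH; auto. intros v Hv; apply Hsup; simpl; auto.
    + assert (HaS : In a S) by (apply Hsup; simpl; auto).
      destruct (in_split a S HaS) as [S1 [S2 ->]].
      rewrite rsum_app. change (rsum (a :: S2) f) with (f a + rsum S2 f).
      assert (rsum l f <= rsum (S1 ++ S2) f).
      { apply IH; auto. apply NoDup_remove_1 with a; auto.
        intros v Hv Hfv. assert (Hin := Hsup v (or_intror Hv) Hfv).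
        apply in_app_or in Hin. apply in_or_app. destruct Hin as [h|[h|h]]; auto.
        subst; contradiction. }
      rewrite rsum_app in H. lra.
Qed.

Lemma fold_Rmax_le {A} (l : list A) (F : A -> R) t : 0 <= t -> (forall u, In u l -> F u <= t) ->
  fold_right Rmax 0 (map F l) <= t.
Proof.
  intros Ht H. induction l; simpl; auto. apply Rmax_lub. apply H; simpl; auto.
  apply IHl. intros; apply H; simpl; auto.
Qed.

Lemma fold_max_ge {A} (l : list A) (F : A -> nat) a : In a l -> (F a <= fold_right Nat.max 0 (map F l))%nat.
Proof.
  induction l as [|x l IH]; simpl; [tauto|]. intros [->|H]; [lia|]. specialize (IH H). lia.
Qed.

Lemma two_elems {A} (l : list A) a c : In a l -> In c l -> a <> c -> (2 <= length l)%nat.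
Proof.
  destruct l as [|x1 [|x2 l]]; simpl.
  - tauto.
  - intros [<-|[]] [<-|[]]; tauto.
  - intros; lia.
Qed.

Lemma sum_zero m : sum_f_R0 (fun _ : nat => 0 - 0) m = 0.
Proof. induction m; simpl; [lra|]. rewrite IHm; lra. Qed.

Notation em := excluded_middle_informative.

Section Main.
Variables (b : nat) (gam : R) (psi psi' : R -> R) (q : nat) (K0 K1 K2 : R -> Prop) (eps del t : R).
Hypothesis hb : (2 <= b)%nat.
Hypothesis hgam : 0 < gam < 1.
Hypothesis hper : forall x, psi (x + 1) = psi x.
Hypothesis hder : forall x, derivable_pt_lim psi x (psi' x).
Hypothesis hcont : continuity psi'.
Hypothesis hq : (1 <= q)%nat.
Hypotheses (hB0 : borel K0) (hB1 : borel K1) (hB2 : borel K2).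
Hypothesis hd01 : forall x, ~ (K0 x /\ K1 x).
Hypothesis hd02 : forall x, ~ (K0 x /\ K2 x).
Hypothesis hd12 : forall x, ~ (K1 x /\ K2 x).
Hypothesis hcov : forall x, in01 x <-> (K0 x \/ K1 x \/ K2 x).
Hypotheses (heps : 0 < eps) (hdel : 0 < del).
Hypothesis hK0 : forall x, K0 x -> e_num b gam psi q x eps del = 1%nat.
Hypothesis hK1 : forall x, K1 x -> exists a c,
      is_word b q a /\ is_word b q c /\ K0 (xw b x a) /\ K0 (xw b x c) /\
      forall u v, u <> v -> inE b gam psi q x eps del u v ->
        (u = a /\ v = c) \/ (u = c /\ v = a).
Hypothesis hK2 : forall x, K2 x -> exists a c d,
      is_word b q a /\ is_word b q c /\ is_word b q d /\
      K0 (xw b x a) /\ K0 (xw b x c) /\ K1 (xw b x d) /\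
      forall u v, u <> v -> inE b gam psi q x eps del u v ->
        (u = a /\ v = c) \/ (u = a /\ v = d) \/
        (u = c /\ v = a) \/ (u = d /\ v = a).
Hypotheses (ht1 : 145/100 <= t) (ht2 : t <= 161/100) (hteq : t_eq t).

Local Notation E x u v := (inE b gam psi q x eps del u v).

Definition mu := / (t ^ 2 - 1).
Definition nu := 2 / (t ^ 3 - 2).

Lemma tf : 0 < mu <= 1 /\ / mu = t ^ 2 - 1 /\ 0 < nu /\ / nu = (t ^ 3 - 2) / 2 /\
   1 + mu + nu = t ^ 2 /\ 1 < t /\ 2 <= t ^ 2 /\ t ^ 2 <= 2 * t.
Proof.
  assert (A : 2 <= t ^ 2) by (simpl; nra).
  assert (B : 0 < t ^ 3 - 2) by (simpl; nra).
  unfold mu, nu. unfold t_eq in hteq.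
  split; [split|split; [|split; [|split; [|split; [|split; [|split]]]]]].
  - apply Rinv_0_lt_compat; lra.
  - rewrite <- Rinv_1. apply Rinv_le_contravar; lra.
  - rewrite Rinv_inv; auto.
  - apply Rdiv_lt_0_compat; lra.
  - unfold Rdiv. rewrite Rinv_mult, Rinv_inv. lra.
  - unfold Rdiv in *. lra.
  - lra.
  - lra.
  - simpl; nra.
Qed.

Definition hasK1 x u := exists w, In w (words b q) /\ w <> u /\ E x u w /\ K1 (xw b x w).

Definition Wf x u v :=
  if em (K2 x) then
    (if em (K0 (xw b x u) /\ K0 (xw b x v)) then (if em (hasK1 x u) then mu else / mu)
     else if em (K0 (xw b x u) /\ K1 (xw b x v)) then nu else / nu)
  else 1.

Definition Vf x u v := if list_eq_dec Nat.eq_dec u v then 1 else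
  if em (E x u v) then Wf x u v else 0.

Definition om x := if em (K0 x) then 1 else if em (K1 x) then t / 2 else / t.

Lemma E_sym x u v : E x u v -> E x v u.
Proof.
  intros [h1 [h2 [s1 [s2 [h3 [h4 [t1 t2]]]]]]]. split; auto. split; auto.
  exists s2, s1. split; auto. split; auto. split; rewrite Rabs_minus_sym; auto.
Qed.

Lemma E_refl x u : is_word b q u -> E x u u.
Proof.
  intros Hu. split; auto. split; auto. exists (fun _ => 0%nat), (fun _ => 0%nat).
  split. intros n; lia. split. intros n; lia.
  split; unfold Rminus; rewrite Rplus_opp_r, Rabs_R0; lra.
Qed.

Lemma E_words x u v : E x u v -> is_word b q u /\ is_word b q v.
Proof. intros [h1 [h2 _]]; auto. Qed.

Lemma K0_single x u v : K0 x -> E x u v -> u = v.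
Proof.
  intros H0 HE. destruct (list_eq_dec Nat.eq_dec u v) as [|Hne]; auto. exfalso.
  destruct (E_words _ _ _ HE) as [Wu Wv].
  pose proof (hK0 x H0) as He. unfold e_num in He.
  assert (Hu : In u (words b q)) by (apply words_iff; auto).
  pose proof (fold_max_ge (words b q) (fun k => length (filter (inEb b gam psi q x eps del k) (words b q))) u Hu) as Hl.
  rewrite He in Hl.
  assert (2 <= length (filter (inEb b gam psi q x eps del u) (words b q)))%nat.
  { apply two_elems with u v; auto; apply filter_In; split; auto.
    - unfold inEb. destruct (em (E x u u)); auto. exfalso; apply n, E_refl; auto.
    - apply words_iff; auto.
    - unfold inEb. destruct (em (E x u v)); auto. }
  simpl in Hl. lia.
Qed.

Lemma om_bounds y : / t <= om y <= 1.
Proof.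
  pose proof tf as [_ [_ [_ [_ [_ [T1 [T2 T3]]]]]]].
  assert (/ t <= 1) by (rewrite <- Rinv_1; apply Rinv_le_contravar; lra).
  assert (0 < / t) by (apply Rinv_0_lt_compat; lra).
  assert (/ t <= t / 2).
  { apply Rmult_le_reg_r with t. lra. rewrite Rinv_l by lra. simpl in T2. lra. }
  unfold om. destruct (em (K0 y)); [lra|]. destruct (em (K1 y)); lra.
Qed.

Lemma om_pos y : 0 < om y.
Proof.
  pose proof (om_bounds y). pose proof tf as [_ [_ [_ [_ [_ [T1 _]]]]]].
  assert (0 < / t) by (apply Rinv_0_lt_compat; lra). lra.
Qed.

Lemma om0 y : K0 y -> om y = 1.
Proof. intros H; unfold om; destruct (em (K0 y)); tauto. Qed.
Lemma om1 y : K1 y -> om y = t / 2.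
Proof. intros H; unfold om; destruct (em (K0 y)). exfalso; apply (hd01 y); auto. destruct (em (K1 y)); tauto. Qed.
Lemma om2 y : K2 y -> om y = / t.
Proof.
  intros H; unfold om; destruct (em (K0 y)). exfalso; apply (hd02 y); auto.
  destruct (em (K1 y)). exfalso; apply (hd12 y); auto. auto.
Qed.

Lemma ratio_le x y : om x / om y <= om x * t.
Proof.
  pose proof (om_bounds y). pose proof (om_pos x). pose proof (om_pos y).
  pose proof tf as [_ [_ [_ [_ [_ [T1 _]]]]]].
  unfold Rdiv. apply Rmult_le_compat_l. lra.
  replace t with (/ / t) by (rewrite Rinv_inv; auto).
  apply Rinv_le_contravar. apply Rinv_0_lt_compat; lra. lra.
Qed.

Lemma W_pos x u v : 0 < Wf x u v.
Proof.
  pose proof tf as [[M1 M2] [M3 [N1 [N2 _]]]].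
  unfold Wf. destruct (em (K2 x)); [|lra].
  destruct (em _). destruct (em _). lra. apply Rinv_0_lt_compat; lra.
  destruct (em _). lra. apply Rinv_0_lt_compat; lra.
Qed.

Lemma V_nonneg x u v : 0 <= Vf x u v.
Proof.
  unfold Vf. destruct (list_eq_dec _ _ _); [lra|]. destruct (em _); [|lra].
  left; apply W_pos.
Qed.

Lemma V_diag x u : Vf x u u = 1.
Proof. unfold Vf. destruct (list_eq_dec _ _ _); tauto. Qed.


Lemma V_noE x u v : u <> v -> ~ E x u v -> Vf x u v = 0.
Proof. intros H1 H2. unfold Vf. destruct (list_eq_dec _ _ _); [tauto|]. destruct (em _); tauto. Qed.

Lemma V_E x u v : u <> v -> E x u v -> Vf x u v = Wf x u v.
Proof. intros H1 H2. unfold Vf. destruct (list_eq_dec _ _ _); [tauto|]. destruct (em _); tauto. Qed.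

Lemma V_le x u v c : u <> v -> Wf x u v <= c -> 0 <= c -> Vf x u v <= c.
Proof. intros H1 H2 H3. unfold Vf. destruct (list_eq_dec _ _ _); [tauto|]. destruct (em _); lra. Qed.

Lemma W_nK2 x u v : ~ K2 x -> Wf x u v = 1.
Proof. intros H. unfold Wf. destruct (em (K2 x)); tauto. Qed.

Lemma W00 x u v : K2 x -> K0 (xw b x u) -> K0 (xw b x v) ->
  Wf x u v = if em (hasK1 x u) then mu else / mu.
Proof.
  intros H2 Hu Hv. unfold Wf. destruct (em (K2 x)); [|tauto].
  destruct (em (K0 (xw b x u) /\ K0 (xw b x v))); tauto.
Qed.

Lemma W00_le x u v : K2 x -> K0 (xw b x u) -> K0 (xw b x v) -> mu <= Wf x u v <= / mu.
Proof.
  intros H2 Hu Hv. rewrite W00 by auto. pose proof tf as [[M1 M2] [M3 _]].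
  assert (1 <= / mu) by (rewrite <- Rinv_1; apply Rinv_le_contravar; lra).
  destruct (em _); lra.
Qed.

Lemma W01 x u v : K2 x -> K0 (xw b x u) -> K1 (xw b x v) -> Wf x u v = nu.
Proof.
  intros H2 Hu Hv. unfold Wf. destruct (em (K2 x)); [|tauto].
  destruct (em (K0 (xw b x u) /\ K0 (xw b x v))). exfalso; apply (hd01 (xw b x v)); tauto.
  destruct (em _); tauto.
Qed.

Lemma W10 x u v : K2 x -> K1 (xw b x u) -> K0 (xw b x v) -> Wf x u v = / nu.
Proof.
  intros H2 Hu Hv. unfold Wf. destruct (em (K2 x)); [|tauto].
  destruct (em (K0 (xw b x u) /\ K0 (xw b x v))). exfalso; apply (hd01 (xw b x u)); tauto.
  destruct (em _). exfalso; apply (hd01 (xw b x u)); tauto. auto.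
Qed.

Definition sumV x u := rsum (words b q) (Vf x u).

Lemma sumV_bound x u S : In u (words b q) -> NoDup (u :: S) ->
  (forall v, v <> u -> E x u v -> In v S) -> sumV x u <= 1 + rsum S (Vf x u).
Proof.
  intros Hu HN Hp. unfold sumV.
  replace (1 + rsum S (Vf x u)) with (rsum (u :: S) (Vf x u)).
  2: { change (rsum (u :: S) (Vf x u)) with (Vf x u u + rsum S (Vf x u)). rewrite V_diag; auto. }
  apply sum_support; auto. apply words_nodup. apply V_nonneg.
  intros v Hv Hne. destruct (list_eq_dec Nat.eq_dec v u) as [->|Hvu]; simpl; auto.
  right. apply Hp; auto. destruct (classic (E x u v)); auto.
  exfalso. apply Hne. apply V_noE; auto.
Qed.

Lemma sumV_nonneg x u : 0 <= sumV x u.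
Proof. apply rsum_nonneg, V_nonneg. Qed.

Lemma term_bound x u r s : om x / om (xw b x u) <= r -> sumV x u <= s -> r * s <= t ->
  om x / om (xw b x u) * sumV x u <= t.
Proof.
  intros H1 H2 H3. pose proof (sumV_nonneg x u).
  assert (0 <= om x / om (xw b x u)).
  { unfold Rdiv. left. apply Rmult_lt_0_compat. apply om_pos. apply Rinv_0_lt_compat, om_pos. }
  apply Rle_trans with (r * s); auto. apply Rmult_le_compat; auto.
Qed.

Lemma noPartner x u : In u (words b q) -> (forall v, v <> u -> ~ E x u v) ->
  om x / om (xw b x u) * sumV x u <= t.
Proof.
  intros Hu Hp. apply term_bound with (om x * t) 1.
  - apply ratio_le.
  - eapply Rle_trans. apply (sumV_bound x u nil); auto.
    + constructor; auto. constructor.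
    + unfold rsum; simpl; lra.
  - pose proof (om_bounds x). pose proof tf as [_ [_ [_ [_ [_ [T1 _]]]]]]. nra.
Qed.

Lemma words_in u : is_word b q u -> In u (words b q).
Proof. apply words_iff. Qed.

Lemma xw_ne0 x u v : K0 (xw b x u) -> K1 (xw b x v) -> u <> v.
Proof. intros H0 H1 ->. apply (hd01 (xw b x v)); auto. Qed.

Lemma term_K1 x u : K1 x -> In u (words b q) -> om x / om (xw b x u) * sumV x u <= t.
Proof.
  intros Hx Hu. pose proof tf as [[M1 M2] [M3 [N1 [N2 [T0 [T1 [T2 T3]]]]]]].
  destruct (hK1 x Hx) as [a [c [Wa [Wc [Ka [Kc Hp]]]]]].
  assert (nK2 : ~ K2 x) by (intro; apply (hd12 x); auto).
  assert (Vle : forall v w, Vf x v w <= 1).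
  { intros v w. unfold Vf. destruct (list_eq_dec _ _ _); [lra|]. destruct (em _); [|lra].
    rewrite W_nK2; auto; lra. }
  destruct (list_eq_dec Nat.eq_dec c a) as [Eca|Nca].
  { apply noPartner; auto. intros v Hv HE. destruct (Hp u v) as [[-> ->]|[-> ->]]; auto. }
  destruct (list_eq_dec Nat.eq_dec u a) as [->|Nua].
  - apply term_bound with (t / 2) 2.
    + rewrite (om0 _ Ka). first [rewrite (om1 x Hx) | rewrite (om2 x Hx)]. lra.
    + eapply Rle_trans. apply (sumV_bound x a (c :: nil)); auto.
      * constructor. simpl; intros [H|[]]; auto. constructor; auto. constructor.
      * intros v Hv HE. destruct (Hp a v) as [[_ ->]|[-> ->]]; simpl; auto.
      * unfold rsum; simpl. specialize (Vle a c). lra.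
    + lra.
  - destruct (list_eq_dec Nat.eq_dec u c) as [->|Nuc].
    + apply term_bound with (t / 2) 2.
      * rewrite (om0 _ Kc). first [rewrite (om1 x Hx) | rewrite (om2 x Hx)]. lra.
      * eapply Rle_trans. apply (sumV_bound x c (a :: nil)); auto.
        -- constructor. simpl; intros [H|[]]; auto. constructor; auto. constructor.
        -- intros v Hv HE. destruct (Hp c v) as [[-> ->]|[_ ->]]; simpl; auto.
        -- unfold rsum; simpl. specialize (Vle c a). lra.
      * lra.
    + apply noPartner; auto. intros v Hv HE. destruct (Hp u v) as [[-> ->]|[-> ->]]; auto.
Qed.

Lemma term_K2 x u : K2 x -> In u (words b q) -> om x / om (xw b x u) * sumV x u <= t.
Proof.
  intros Hx Hu. pose proof tf as [[M1 M2] [M3 [N1 [N2 [T0 [T1 [T2 T3]]]]]]].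
  destruct (hK2 x Hx) as [a [c [d [Wa [Wc [Wd [Ka [Kc [Kd Hp]]]]]]]]].
  assert (Nda : d <> a) by (intro; subst; apply (hd01 (xw b x a)); auto).
  assert (Ndc : d <> c) by (intro; subst; apply (hd01 (xw b x c)); auto).
  assert (Hit : 0 < / t) by (apply Rinv_0_lt_compat; lra).
  assert (Et : / t * t ^ 2 = t) by (simpl; field; lra).
  destruct (list_eq_dec Nat.eq_dec u a) as [->|Nua].
  - apply term_bound with (/ t) (t ^ 2).
    + rewrite (om0 _ Ka). first [rewrite (om1 x Hx) | rewrite (om2 x Hx)]. lra.
    + assert (Vd : Vf x a d <= nu).
      { apply V_le; auto. rewrite W01; auto; lra. lra. }
      destruct (list_eq_dec Nat.eq_dec c a) as [Eca|Nca].
      * eapply Rle_trans. apply (sumV_bound x a (d :: nil)); auto.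
        -- constructor. simpl; intros [H|[]]; auto. constructor; auto. constructor.
        -- intros v Hv HE. destruct (Hp a v) as [[_ ->]|[[_ ->]|[[_ ->]|[-> ->]]]]; simpl; auto;
             try (exfalso; congruence).
        -- unfold rsum; simpl. lra.
      * eapply Rle_trans. apply (sumV_bound x a (c :: d :: nil)); auto.
        -- constructor. simpl; intros [H|[H|[]]]; auto.
           constructor. simpl; intros [H|[]]; auto. constructor; auto. constructor.
        -- intros v Hv HE. destruct (Hp a v) as [[_ ->]|[[_ ->]|[[_ ->]|[-> ->]]]]; simpl; auto;
             try (exfalso; congruence).
        -- unfold rsum; simpl.
           destruct (classic (E x a d)) as [Ead|Nad].
           ++ assert (Vc : Vf x a c <= mu).
              { apply V_le; auto; [|lra]. rewrite W00; auto. destruct (em (hasK1 x a)) as [|Hn]. lra.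
                exfalso. apply Hn. exists d. split. apply words_in; auto. split; auto. }
              lra.
           ++ rewrite (V_noE x a d); auto.
              assert (Vc : Vf x a c <= / mu).
              { apply V_le; auto. apply W00_le; auto. lra. }
              lra.
    + lra.
  - destruct (list_eq_dec Nat.eq_dec u c) as [->|Nuc].
    + apply term_bound with (/ t) (t ^ 2).
      * rewrite (om0 _ Kc). first [rewrite (om1 x Hx) | rewrite (om2 x Hx)]. lra.
      * eapply Rle_trans. apply (sumV_bound x c (a :: nil)); auto.
        -- constructor. simpl; intros [H|[]]; auto. constructor; auto. constructor.
        -- intros v Hv HE. destruct (Hp c v) as [[-> _]|[[-> _]|[[_ ->]|[-> _]]]]; simpl; auto;
             try (exfalso; congruence).
        -- unfold rsum; simpl.
           assert (Vc : Vf x c a <= / mu).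
           { apply V_le; auto. apply W00_le; auto. lra. }
           lra.
      * lra.
    + destruct (list_eq_dec Nat.eq_dec u d) as [->|Nud].
      * apply term_bound with (/ t / (t / 2)) (t ^ 3 / 2).
        -- rewrite (om1 _ Kd). rewrite (om2 x Hx). lra.
        -- eapply Rle_trans. apply (sumV_bound x d (a :: nil)); auto.
           ++ constructor. simpl; intros [H|[]]; auto. constructor; auto. constructor.
           ++ intros v Hv HE. destruct (Hp d v) as [[-> _]|[[-> _]|[[-> _]|[_ ->]]]]; simpl; auto;
                try (exfalso; congruence).
           ++ unfold rsum; simpl.
              assert (Vc : Vf x d a <= / nu).
              { apply V_le; auto; [rewrite W10; auto; lra | left; apply Rinv_0_lt_compat; lra]. }
              lra.
        -- right. simpl. field. lra.
      * apply noPartner; auto. intros v Hv HE.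
        destruct (Hp u v) as [[-> _]|[[-> _]|[[-> _]|[-> _]]]]; auto.
Qed.

Lemma term_K0 x u : K0 x -> In u (words b q) -> om x / om (xw b x u) * sumV x u <= t.
Proof.
  intros Hx Hu. apply noPartner; auto. intros v Hv HE. apply Hv. symmetry.
  apply (K0_single x u v); auto.
Qed.

Lemma Sigma_le x : in01 x -> Sigma b q Vf om x <= t.
Proof.
  intros Hx. pose proof tf as [_ [_ [_ [_ [_ [T1 _]]]]]].
  unfold Sigma. apply fold_Rmax_le. lra.
  intros u Hu. change (fold_right Rplus 0 (map (fun v => Vf x u v) (words b q))) with (sumV x u).
  apply hcov in Hx. destruct Hx as [H|[H|H]].
  - apply term_K0; auto.
  - apply term_K1; auto.
  - apply term_K2; auto.
Qed.

Lemma prod_ge x u v : in01 x -> E x u v -> 1 <= Vf x u v * Vf x v u.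
Proof.
  intros Hx HE. pose proof tf as [[M1 M2] [M3 [N1 [N2 [T0 [T1 [T2 T3]]]]]]].
  destruct (list_eq_dec Nat.eq_dec u v) as [->|Nuv].
  { rewrite V_diag. lra. }
  assert (HE' := E_sym _ _ _ HE).
  rewrite (V_E x u v), (V_E x v u); auto.
  apply hcov in Hx. destruct Hx as [H|[H|H]].
  - exfalso. apply Nuv. apply (K0_single x u v); auto.
  - assert (~ K2 x) by (intro; apply (hd12 x); auto).
    rewrite !W_nK2; auto. lra.
  - destruct (hK2 x H) as [a [c [d [Wa [Wc [Wd [Ka [Kc [Kd Hp]]]]]]]]].
    assert (nc : forall c', c' <> a -> (forall w, w <> c' -> E x c' w -> w = a) -> ~ hasK1 x c').
    { intros c' _ Hc' [w [_ [Hw [HEw Kw]]]]. rewrite (Hc' w Hw HEw) in Kw.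
      apply (hd01 (xw b x a)); auto. }
    assert (Nda : d <> a) by (intro; subst; apply (hd01 (xw b x a)); auto).
    assert (Ndc : d <> c) by (intro; subst; apply (hd01 (xw b x c)); auto).
    assert (mi : mu * / mu = 1) by (field; lra).
    assert (ni : nu * / nu = 1) by (field; lra).
    destruct (Hp u v Nuv HE) as [[-> ->]|[[-> ->]|[[-> ->]|[-> ->]]]].
    + assert (Wca : Wf x c a = / mu).
      { rewrite W00; auto. destruct (em (hasK1 x c)) as [h|]; auto. exfalso.
        apply (nc c) in h; auto. intros w Hw HEw.
        destruct (Hp c w (not_eq_sym Hw) HEw) as [[-> _]|[[-> _]|[[_ ->]|[-> _]]]]; auto; congruence. }
      rewrite Wca. pose proof (W00_le x a c H Ka Kc). nra.
    + rewrite W01, W10; auto. lra.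
    + assert (Wca : Wf x c a = / mu).
      { rewrite W00; auto. destruct (em (hasK1 x c)) as [h|]; auto. exfalso.
        apply (nc c) in h; auto. intros w Hw HEw.
        destruct (Hp c w (not_eq_sym Hw) HEw) as [[-> _]|[[-> _]|[[_ ->]|[-> _]]]]; auto; congruence. }
      rewrite Wca. pose proof (W00_le x a c H Ka Kc). nra.
    + rewrite W10, W01; auto. lra.
Qed.

Lemma xw_cont u : continuity (fun x => xw b x u).
Proof.
  unfold xw. apply cont_affine.
  assert (0 < INR b) by (apply lt_0_INR; lia).
  apply Rgt_not_eq, pow_lt; auto.
Qed.

Lemma BP_xw (K : R -> Prop) u : borel K -> BP (fun x => K (xw b x u)).
Proof. intros HK. apply BP_borel. apply (borel_preim (fun x => xw b x u) (xw_cont u) K HK). Qed.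

Lemma E_BP u v : length u = q -> length v = q -> BP (fun x => E x u v).
Proof. intros Hu Hv. apply (inE_BP b gam psi psi' hb hgam hper hder hcont q eps del u v hq Hu Hv). Qed.

Lemma hasK1_BP u : length u = q -> BP (fun x => hasK1 x u).
Proof.
  intros Hu. unfold hasK1. apply BP_exists_list with (P := fun w x => w <> u /\ E x u w /\ K1 (xw b x w)).
  intros w Hw. apply words_iff in Hw. destruct Hw as [Hw _].
  apply BP_and. apply BP_const. apply BP_and. apply E_BP; auto. apply BP_xw; auto.
Qed.

Lemma V_meas u v : is_word b q u -> is_word b q v -> measurable01 (fun x => Vf x u v).
Proof.
  intros [Hu _] [Hv _]. unfold Vf. destruct (list_eq_dec Nat.eq_dec u v).
  - apply meas_const.
  - apply meas_if. apply E_BP; auto. 2: apply meas_const.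
    unfold Wf. apply meas_if. apply BP_borel; auto. 2: apply meas_const.
    apply meas_if. apply BP_and; apply BP_xw; auto.
    + apply meas_if. apply hasK1_BP; auto. apply meas_const. apply meas_const.
    + apply meas_if. apply BP_and; apply BP_xw; auto. apply meas_const. apply meas_const.
Qed.

Lemma om_weight : weight om.
Proof.
  pose proof tf as [_ [_ [_ [_ [_ [T1 [T2 T3]]]]]]].
  split; [|split].
  - unfold om. apply meas_if. apply BP_borel; auto. apply meas_const.
    apply meas_if. apply BP_borel; auto. apply meas_const. apply meas_const.
  - intros x _. apply om_pos.
  - exists t. intros x _. pose proof (om_bounds x). pose proof (om_pos x). split. lra.
    assert (/ t <= om x) by lra.
    rewrite <- (Rinv_inv t).
    apply Rinv_le_contravar; auto. apply Rinv_0_lt_compat; lra.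
Qed.

Lemma V_adm : admissible b gam psi q Vf.
Proof.
  split; [|split].
  - intros u v Hu Hv. apply V_meas; auto.
  - intros x u v _ _ _. apply V_nonneg.
  - exists eps, del. split; auto. split; auto. intros x u v Hx HE. apply prod_ge; auto.
Qed.

Lemma main_sigma : sigma_le b gam psi q t.
Proof.
  intros s Hs. exists om, Vf. split. apply om_weight. split. apply V_adm.
  intros eta Heta. exists (fun _ => 0), (fun _ => 0). split; [|split].
  - intros x [Hx Hsx]. exfalso. pose proof (Sigma_le x Hx). lra.
  - intros; lra.
  - intros m. rewrite sum_zero. lra.
Qed.

End Main.

Theorem lemma2p12
  (b : nat) (hb : (2 <= b)%nat)
  (gam : R) (hgam : / INR b < gam < 1)
  (psi : R -> R) (hper : forall x, psi (x + 1) = psi x)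
  (hC1 : exists psi' : R -> R,
      (forall x, derivable_pt_lim psi x (psi' x)) /\ continuity psi')
  (q : nat) (hq : (1 <= q)%nat)
  (K0 K1 K2 : R -> Prop)
  (hB0 : borel K0) (hB1 : borel K1) (hB2 : borel K2)
  (hd01 : forall x, ~ (K0 x /\ K1 x))
  (hd02 : forall x, ~ (K0 x /\ K2 x))
  (hd12 : forall x, ~ (K1 x /\ K2 x))
  (hcov : forall x, in01 x <-> (K0 x \/ K1 x \/ K2 x))
  (eps del : R) (heps : 0 < eps) (hdel : 0 < del)
  (hK0 : forall x, K0 x -> e_num b gam psi q x eps del = 1%nat)
  (hK1 : forall x, K1 x -> exists a c,
      is_word b q a /\ is_word b q c /\ K0 (xw b x a) /\ K0 (xw b x c) /\
      forall u v, u <> v -> inE b gam psi q x eps del u v ->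
        (u = a /\ v = c) \/ (u = c /\ v = a))
  (hK2 : forall x, K2 x -> exists a c d,
      is_word b q a /\ is_word b q c /\ is_word b q d /\
      K0 (xw b x a) /\ K0 (xw b x c) /\ K1 (xw b x d) /\
      forall u v, u <> v -> inE b gam psi q x eps del u v ->
        (u = a /\ v = c) \/ (u = a /\ v = d) \/
        (u = c /\ v = a) \/ (u = d /\ v = a)) :
  exists t, 1 < t /\ 2 < t ^ 3 /\ t_eq t /\
    (forall t', 1 < t' -> 2 < t' ^ 3 -> t_eq t' -> t' = t) /\
    t < 161 / 100 /\ sigma_le b gam psi q t.
Proof.
  destruct hC1 as [psi' [hder hcont]].
  assert (hg : 0 < gam < 1).
  { assert (0 < / INR b) by (apply Rinv_0_lt_compat, lt_0_INR; lia). lra. }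
  destruct t_exists as [t [[h1 h2] hP]].
  assert (ht : t_eq t) by (apply Pol_teq; auto).
  assert (a1 : 1 < t) by lra.
  assert (a2 : 2 < t ^ 3) by (simpl; nra).
  exists t. split; auto. split; auto. split; auto. split.
  { intros t' b1 b2 b3. apply (t_unique t t'); auto. }
  split; auto.
  apply (main_sigma b gam psi psi' q K0 K1 K2 eps del t); auto; lra.
Qed.
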